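(* Let $T$ be a repeater tree with root $r$, and let $n$ be the number of $g$-type vertices of $T$. For each $h$-type vertex $h$ of $T$ let $c(h)$ be its unique child. Apply to $T$ the operations $X_h := LC_{c(h)}\,Z_h\,LC_h\,LC_{c(h)}$, one for every $h$-type vertex $h$, in an order in which every $h$-type vertex is processed before any $h$-type vertex of strictly smaller depth. Then the resulting graph is the star graph with center $r$ whose vertex set is exactly the set of $n$ $g$-type vertices of $T$. Consequently, if a graph $G$ has $T$ as a vertex-minor, then an $n$-qubit GHZ state can be obtained from the graph state $|G\rangle$ by local Pauli measurements and local Clifford operations.
   Context: All graphs are finite, simple and undirected; $N^G_a$ is the neighbourhood of $a$ in $G$. $Z_v(G)=G-v$ is vertex deletion. $LC_v(G)=(V,E\,\Delta\,K_{N^G_v})$ is local complementation ($K_{N^G_v}$ = edge set of the complete graph on $N^G_v$, $\Delta$ = symmetric difference); operators are applied right to left. A vertex-minor of $G$ is a graph obtained from $G$ by a sequence of vertex deletions and local complementations. A star graph with center $a$ is a graph in which $a$ is adjacent to every other vertex and no other edges exist. The graph state of $G=(V,E)$ is $|G\rangle=\prod_{(i,j)\in E}CZ_{i,j}|+\rangle^{\otimes V}$; local complementations correspond to local Clifford operations, a $Z$-measurement of qubit $v$ corresponds to $Z_v$, and an $X$-measurement of qubit $v$ corresponds (up to local Clifford corrections) to $LC_wZ_vLC_vLC_w$ for a neighbour $w$ of $v$; the graph state of a star graph is local-Clifford equivalent to a GHZ state on the same qubits (via Hadamards on the non-center qubits). Repeater tree: a rooted tree each of whose vertices is labelled $g$-type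 or $h$-type such that (1) the root and all leaves are $g$-type; (2) every root-to-leaf path has type pattern $g_0,h_1,g_1,h_2,\dots,h_{k-1},g_{k-1},g_k$ for some $k\ge1$ (for $k=1$ the path is $g_0,g_1$), where $g_i$ are $g$-type and $h_i$ are $h$-type; (3) every $h$-type vertex has exactly one child; (4) the subtree rooted at any non-leaf $g$-type vertex, with the inherited labels, is again a repeater tree. *)

(* Defs.v *)
From mathcomp Require Import all_boot.
Set Implicit Arguments. Unset Strict Implicit. Unset Printing Implicit Defensive.

Section Graphs.
Variable T : finType.

(* A finite simple graph on a vertex set V ⊆ T: (V, E) with E a set of 2-subsets of V. *)
Definition graph := ({set T} * {set {set T}})%type.

Definition wf_graph (G : graph) : Prop :=
  forall e, e \in G.2 ->
    exists a b, [/\ a \in G.1, b \in G.1, a != b & e = [set a; b]].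

Definition nbhd (G : graph) (a : T) : {set T} :=
  [set b in G.1 | (b != a) && ([set a; b] \in G.2)].

Definition Zop (v : T) (G : graph) : graph :=
  (G.1 :\ v, [set e in G.2 | v \notin e]).

Definition clique (A : {set T}) : {set {set T}} :=
  [set [set a; b] | a in A, b in A & a != b].

Definition symdiff (A B : {set {set T}}) := (A :\: B) :|: (B :\: A).

Definition LCop (v : T) (G : graph) : graph :=
  (G.1, symdiff G.2 (clique (nbhd G v))).

(* a graph operation: (true, v) = LC_v, (false, v) = Z_v;
   a list of operations is applied from head to tail (i.e. the head acts first) *)
Definition gop (o : bool * T) (G : graph) : graph :=
  if o.1 then LCop o.2 G else Zop o.2 G.

Definition apply_ops (G : graph) (ops : seq (bool * T)) : graph :=
  foldl (fun H o => gop o H) G ops.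

Definition vertex_minor (H G : graph) : Prop :=
  exists ops, apply_ops G ops = H.

Definition star (W : {set T}) (a : T) : graph :=
  (W, [set [set a; v] | v in W :\ a]).

Definition rooted_tree (V : {set T}) (r : T) (par : T -> T) : Prop :=
  [/\ r \in V, par r = r, {in V, forall v, par v \in V} &
      {in V, forall v, exists n, iter n par v = r}].

Definition children (V : {set T}) (r : T) (par : T -> T) (u : T) : {set T} :=
  [set v in V | (v != r) && (par v == u)].

Definition is_leaf V r par u : bool := children V r par u == set0.

Definition anc (par : T -> T) (u v : T) : Prop := exists n, iter n par v = u.

Definition depth (r : T) (par : T -> T) (v : T) : nat :=
  find (fun n => iter n par v == r) (iota 0 #|T|.+1).

(* labels (true = g-type, false = h-type) along the path from u down to l *)
Definition path_labels (r : T) (par : T -> T) (g : T -> bool) (u l : T) : seq bool :=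
  rev [seq g (iter i par l) | i <- iota 0 (depth r par l - depth r par u).+1].

(* g_0, h_1, g_1, ..., h_{k-1}, g_{k-1}, g_k  with k >= 1 *)
Definition rep_pattern (s : seq bool) : Prop :=
  exists k, 0 < k /\ s = true :: flatten (nseq k.-1 [:: false; true]) ++ [:: true].

(* repeater tree; condition (4) for the subtree at a non-leaf g-type vertex u
   reduces (conditions (1),(3) being inherited) to the path pattern for all
   paths from u down to leaves below u *)
Definition repeater_tree (V : {set T}) (r : T) (par : T -> T) (g : T -> bool) : Prop :=
  [/\ rooted_tree V r par,
      g r /\ {in V, forall l, is_leaf V r par l -> g l},
      {in V, forall l, is_leaf V r par l -> rep_pattern (path_labels r par g r l)},
      {in V, forall h, ~~ g h -> #|children V r par h| = 1} &
      {in V, forall u, g u -> ~~ is_leaf V r par u ->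
         {in V, forall l, is_leaf V r par l -> anc par u l ->
            rep_pattern (path_labels r par g u l)}}].

Definition tree_graph (V : {set T}) (r : T) (par : T -> T) : graph :=
  (V, [set [set v; par v] | v in V & v != r]).

Definition child (V : {set T}) (r : T) (par : T -> T) (h : T) : T :=
  odflt h [pick v in children V r par h].

Definition Xop (c : T -> T) (h : T) (G : graph) : graph :=
  LCop (c h) (Zop h (LCop h (LCop (c h) G))).

End Graphs.

(* Main.v *)
Require Import Defs.
From mathcomp Require Import all_boot zify.
Set Implicit Arguments. Unset Strict Implicit. Unset Printing Implicit Defensive.

Section GraphLemmas.
Variable T : finType.
Implicit Types (G H : graph T) (a b c d v : T).

Lemma set2_eq a b c d : [set a; b] = [set c; d] <-> (a = c /\ b = d \/ a = d /\ b = c).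
Proof.
split; last by case=> [[-> ->]|[-> ->]]; rewrite // setUC.
move=> E.
have Ha : a \in [set c; d] by rewrite -E set21.
have Hb : b \in [set c; d] by rewrite -E set22.
have Hc : c \in [set a; b] by rewrite E set21.
have Hd : d \in [set a; b] by rewrite E set22.
move: Ha Hb Hc Hd; rewrite !inE => /orP[]/eqP-> /orP[]/eqP-> /orP[]/eqP H1 /orP[]/eqP H2;
  subst; by [left|right].
Qed.

Definition adj G a b := [set a; b] \in G.2.

Lemma adjC G a b : adj G a b = adj G b a.
Proof. by rewrite /adj setUC. Qed.

Lemma wf_adj G a b : wf_graph G -> adj G a b -> [/\ a \in G.1, b \in G.1 & a != b].
Proof.
move=> wf /wf [x [y [Hx Hy xy /set2_eq [[-> ->]|[-> ->]]]]]; split=> //.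
by rewrite eq_sym.
Qed.

Lemma graph_ext G H : wf_graph G -> wf_graph H -> G.1 = H.1 ->
  (forall a b, a != b -> adj G a b = adj H a b) -> G = H.
Proof.
case: G => V1 E1; case: H => V2 E2 /= wG wH -> E; congr pair.
apply/setP=> e; apply/idP/idP => He.
- have [x [y [_ _ xy ee]]] := wG e He; subst e.
  by have := E x y xy; rewrite /adj /= => <-.
- have [x [y [_ _ xy ee]]] := wH e He; subst e.
  by have := E x y xy; rewrite /adj /= => ->.
Qed.

Lemma wf_Z v G : wf_graph G -> wf_graph (Zop v G).
Proof.
move=> wG e; rewrite inE => /andP[He ve].
have [x [y [Hx Hy xy ee]]] := wG e He; subst e.
move: ve; rewrite !inE negb_or => /andP[vx vy].
exists x, y; split=> //=; rewrite !inE ?Hx ?Hy andbT eq_sym //.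
Qed.

Lemma adj_Z v G a b : adj (Zop v G) a b = [&& adj G a b, a != v & b != v].
Proof.
by rewrite /adj /Zop /= inE !inE negb_or ![v == _]eq_sym andbA andbC andbA.
Qed.

Lemma nbhdE G v b : wf_graph G -> (b \in nbhd G v) = (b != v) && adj G v b.
Proof.
move=> wG; rewrite /nbhd inE -/(adj G v b) andbA.
case: (boolP (adj G v b)) => A; last by rewrite !andbF.
by have [_ -> _] := wf_adj wG A.
Qed.

Lemma clique_mem (A : {set T}) a b : a != b ->
  ([set a; b] \in clique A) = (a \in A) && (b \in A).
Proof.
move=> ab; apply/imset2P/andP.
- case=> x y Hx; rewrite inE => /andP[Hy xy] /set2_eq [[-> ->]|[-> ->]]; by split.
- by case=> Ha Hb; exists a b => //; rewrite inE Hb.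
Qed.

Lemma wf_LC v G : wf_graph G -> wf_graph (LCop v G).
Proof.
move=> wG e; rewrite /LCop /symdiff /= !inE => /orP[]/andP[_ He].
- exact: wG.
- move/imset2P: He => [x y Hx]; rewrite inE => /andP[Hy xy] ->.
  move: Hx Hy; rewrite /nbhd !inE => /andP[Hx _] /andP[Hy _].
  by exists x, y.
Qed.

Lemma adj_LC v G a b : wf_graph G -> a != b ->
  adj (LCop v G) a b = adj G a b (+) ((a \in nbhd G v) && (b \in nbhd G v)).
Proof.
move=> wG ab; rewrite /adj /LCop /symdiff /= in_setU !in_setD clique_mem //.
by case: ([set a; b] \in G.2); case: ((a \in nbhd G v) && (b \in nbhd G v)).
Qed.

End GraphLemmas.


Ltac prune := repeat match goal with
  | H : ?t |- _ =>
     tryif (lazymatch t with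
        | @eq ?ty _ _ => unify ty nat
        | is_true (leq _ _) => idtac
        | is_true (ltn _ _) => idtac
        | is_true (@eq_op _ ?x _) => let tx := type of x in unify tx nat
        | is_true (~~ (@eq_op _ ?x _)) => let tx := type of x in unify tx nat
        | is_true (~~ (leq _ _)) => idtac
        | _ => fail
        end) then fail else clear H
  end.
Ltac slia := prune; lia.

Section Tree.
Variable T : finType.
Variables (V : {set T}) (r : T) (par : T -> T) (g : T -> bool).
Hypothesis Hrep : repeater_tree V r par g.

Local Notation depth := (depth r par).

Lemma rV : r \in V. Proof. by case: Hrep => [[]]. Qed.
Lemma parr : par r = r. Proof. by case: Hrep => [[]]. Qed.
Lemma parV v : v \in V -> par v \in V. Proof. by case: Hrep => [[_ _ H _]] *; apply: H. Qed.
Lemma gr : g r. Proof. by case: Hrep => _ []. Qed.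

Lemma iterV k v : v \in V -> iter k par v \in V.
Proof. by move=> vV; elim: k => //= k IH; apply: parV. Qed.

Lemma iter_r k : iter k par r = r.
Proof. by elim: k => //= k ->; rewrite parr. Qed.

Lemma small_iter v : v \in V -> exists2 k, k < #|T| & iter k par v = r.
Proof.
case: Hrep => [[_ _ _ H]] _ _ _ _ vV.
have [n Hn] := H v vV.
have C : fconnect par v r by rewrite -Hn fconnect_iter.
exists (findex par v r); last exact: iter_findex.
apply: leq_trans (findex_max C) _; exact: max_card.
Qed.

Lemma depth_spec v : v \in V -> iter (depth v) par v = r /\ depth v < #|T|.
Proof.
move=> vV; have [k kT Hk] := small_iter vV.
set p := (fun n => iter n par v == r).
have Hk' : p k by rewrite /p Hk.
have kin : k < size (iota 0 #|T|.+1) by rewrite size_iota; slia.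
have Hd : depth v <= k.
  rewrite leqNgt; apply/negP => lt.
  have := before_find 0 lt; rewrite nth_iota; last slia.
  by rewrite add0n /p Hk eqxx.
have hs : has p (iota 0 #|T|.+1).
  by apply/hasP; exists k => //; rewrite mem_iota; slia.
have := nth_find 0 hs; rewrite -/(depth v) nth_iota; last slia.
by rewrite add0n => /eqP ->; split=> //; slia.
Qed.

Lemma depth_min v k : v \in V -> iter k par v = r -> depth v <= k.
Proof.
move=> vV Hk; have [_ dT] := depth_spec vV.
case: (ltnP #|T| k) => kT; first slia.
rewrite leqNgt; apply/negP => lt.
have := before_find 0 lt; rewrite nth_iota; last slia.
by rewrite add0n Hk eqxx.
Qed.

Lemma depth_r : depth r = 0.
Proof. by rewrite /Defs.depth /= eqxx. Qed.

Lemma depth0 v : v \in V -> depth v = 0 -> v = r.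
Proof. by move=> vV d0; have [] := depth_spec vV; rewrite d0. Qed.

Lemma depth_par v : v \in V -> v != r -> depth (par v) = (depth v).-1 /\ 0 < depth v.
Proof.
move=> vV vr; have [H1 _] := depth_spec vV.
have d0 : 0 < depth v by case: (depth v) H1 => //= E; rewrite E eqxx in vr.
have H2 : iter (depth v).-1 par (par v) = r by rewrite -iterSr prednK.
have := depth_min (parV vV) H2.
have [H3 _] := depth_spec (parV vV).
have := depth_min vV (etrans (iterSr _ _ _) H3).
slia.
Qed.

Lemma depth_iter k v : v \in V -> depth (iter k par v) = depth v - k.
Proof.
move=> vV; elim: k => [|k IH]; first by rewrite subn0.
rewrite iterS; have [E|ne] := eqVneq (iter k par v) r.
  rewrite E parr; rewrite E depth_r in IH; rewrite depth_r; slia.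
have [-> _] := depth_par (iterV k vV) ne; slia.
Qed.

Lemma depth_lt v : v \in V -> depth v < #|T|.
Proof. by case/depth_spec. Qed.


Definition tpat n := true :: flatten (nseq n [:: false; true]) ++ [:: true].
Lemma tpatS n : tpat n.+1 = [:: true, false & tpat n]. Proof. by []. Qed.

Lemma size_tpat n : size (tpat n) = n.*2.+2.
Proof. elim: n => // n IH; rewrite tpatS; change ((size (tpat n)).+2 = n.+1.*2.+2); by rewrite IH doubleS. Qed.

Lemma tpat_char n :
  1 < size (tpat n) /\ forall i, i < size (tpat n) ->
    nth false (tpat n) i = ~~ odd i || (i.+1 == size (tpat n)).
Proof.
rewrite size_tpat; split=> //.
elim: n => [|n IH]; first by case=> [|[|]].
rewrite tpatS doubleS; case=> [|[|i]] //= lt.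
rewrite IH; last slia.
by rewrite negbK.
Qed.

Lemma pat_char s : rep_pattern s ->
  1 < size s /\ forall i, i < size s -> nth false s i = ~~ odd i || (i.+1 == size s).
Proof.
case=> k [k0 ->]; case: k k0 => // k _ /=; exact: tpat_char.
Qed.

Lemma pat_next s i : rep_pattern s -> i.+1 < size s -> nth false s i = false ->
  nth false s i.+1.
Proof.
move=> /pat_char [_ H] lt; rewrite H; last slia.
rewrite (H i.+1) //= => /norP[/negbNE -> _] //.
Qed.

Lemma pat_tt s i : rep_pattern s -> i.+1 < size s -> nth false s i -> nth false s i.+1 ->
  i.+2 = size s.
Proof.
move=> /pat_char [_ H] lt; rewrite H; last slia.
rewrite (H i.+1) //= => /orP[oi|/eqP E]; last slia.
by rewrite negbK (negbTE oi) => /eqP.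
Qed.

Lemma labels_size l : size (path_labels r par g r l) = (depth l).+1.
Proof. by rewrite /path_labels size_rev size_map size_iota depth_r subn0. Qed.

Lemma labels_nth l j : j <= depth l ->
  nth false (path_labels r par g r l) j = g (iter (depth l - j) par l).
Proof.
move=> jl; rewrite /path_labels depth_r subn0 nth_rev size_map size_iota; last slia.
rewrite (nth_map 0) ?size_iota; last slia.
rewrite nth_iota; last slia.
by rewrite add0n subSS.
Qed.

Lemma childrenP u v : (v \in children V r par u) = [&& v \in V, v != r & par v == u].
Proof. by rewrite inE. Qed.

Lemma leaf_below u : u \in V -> exists l m,
  [/\ l \in V, is_leaf V r par l, iter m par l = u & (~~ is_leaf V r par u -> 0 < m)].
Proof.
move=> uV; move: {2}(#|T| - depth u) (leqnn (#|T| - depth u)) => n.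
elim: n u uV => [|n IH] u uV Hn.
  have := depth_lt uV; slia.
case: (boolP (is_leaf V r par u)) => lu.
  by exists u, 0; split.
have [v] : exists v, v \in children V r par u.
  by apply/set0Pn; rewrite /is_leaf in lu.
rewrite childrenP => /and3P[vV vr /eqP pv].
have [dv dv0] := depth_par vV vr.
have := depth_lt vV; rewrite pv in dv => dvT.
have [l [m [lV ll Hl _]]] := IH v vV ltac:(slia).
by exists l, m.+1; split=> //; rewrite iterS Hl.
Qed.

Lemma pat_root l : l \in V -> is_leaf V r par l -> rep_pattern (path_labels r par g r l).
Proof. by case: Hrep => _ _ H _ _; apply: H. Qed.

Lemma g_child h c : h \in V -> ~~ g h -> c \in V -> c != r -> par c = h -> g c.
Proof.
move=> hV gh cV cr pc.
have [l [m [lV ll Hl _]]] := leaf_below cV.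
have dc := depth_iter m lV; rewrite Hl in dc.
have [dh dc0] := depth_par cV cr; rewrite pc in dh.
have P := pat_root lV ll.
have := @pat_next _ (depth h) P; rewrite labels_size.
rewrite !labels_nth; try slia.
have -> : depth l - depth h = m.+1 by slia.
have -> : depth l - (depth h).+1 = m by slia.
rewrite iterS Hl pc (negbTE gh); apply; first slia.
by [].
Qed.

Lemma gg_leaf x : x \in V -> x != r -> g x -> g (par x) -> is_leaf V r par x.
Proof.
move=> xV xr gx gp; apply/negPn/negP => nl.
have [l [m [lV ll Hl m0]]] := leaf_below xV.
have {}m0 := m0 nl.
have dx := depth_iter m lV; rewrite Hl in dx.
have [dp dx0] := depth_par xV xr.
have P := pat_root lV ll.
have := @pat_tt _ (depth (par x)) P; rewrite labels_size.
rewrite !labels_nth; try slia.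
have -> : depth l - depth (par x) = m.+1 by slia.
have -> : depth l - (depth (par x)).+1 = m by slia.
rewrite iterS Hl gx gp => H; have := H ltac:(slia) isT isT; slia.
Qed.

Lemma child_spec h : h \in V -> ~~ g h ->
  let c := child V r par h in
  [/\ c \in V, c != r, par c = h &
      forall v, v \in V -> v != r -> par v = h -> v = c].
Proof.
move=> hV gh /=; case: Hrep => _ _ _ Hc _.
have /eqP/cards1P [x Ex] := Hc h hV gh.
have cx : child V r par h = x.
  rewrite /child; case: pickP => [y|]; first by rewrite Ex inE => /eqP.
  by move/(_ x); rewrite Ex set11.
have : x \in children V r par h by rewrite Ex set11.
rewrite childrenP cx => /and3P[xV xr /eqP px]; split=> // v vV vr pv.
have : v \in children V r par h by rewrite childrenP vV vr pv eqxx.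
by rewrite Ex inE => /eqP.
Qed.


Definition ab (P : seq T) x := (x \in P) || ((x != r) && (par x \in P)).

Fixpoint climb (P : seq T) n x :=
  if n is n'.+1 then (if ab P x then climb P n' (par x) else x) else x.

Definition fpar P v := climb P #|T| (par v).

Lemma climb_spec P n x m : ~~ ab P (iter m par x) -> m <= n ->
  exists k, [/\ k <= m, climb P n x = iter k par x, ~~ ab P (iter k par x) &
                forall j, j < k -> ab P (iter j par x)].
Proof.
elim: n x m => [|n IH] x m Hm mn.
  have m0 : m = 0 by slia. by exists 0; rewrite m0 in Hm; split.
rewrite /=; case: (boolP (ab P x)) => Ax; last by exists 0.
case: m Hm mn => [|m] Hm mn; first by rewrite /= Ax in Hm.
rewrite iterSr in Hm.
have [k [km -> Hk Hj]] := IH (par x) m Hm ltac:(slia).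
exists k.+1; split; [slia | by rewrite iterSr | by rewrite iterSr |].
by case=> [|j] // jk; rewrite iterSr; apply: Hj.
Qed.

Lemma first_uniq P x k k' :
  ~~ ab P (iter k par x) -> (forall j, j < k -> ab P (iter j par x)) ->
  ~~ ab P (iter k' par x) -> (forall j, j < k' -> ab P (iter j par x)) -> k = k'.
Proof.
move=> H1 H2 H3 H4; case: (ltngtP k k') => // lt.
- by rewrite H4 in H1.
- by rewrite H2 in H3.
Qed.

Lemma ab_r P : (forall x, x \in P -> ~~ g x) -> ab P r = false.
Proof.
move=> HP; rewrite /ab eqxx /= orbF; apply/negP => /HP; by rewrite gr.
Qed.

Lemma fpar_ex P v : (forall x, x \in P -> ~~ g x) -> v \in V ->
  exists k, [/\ fpar P v = iter k par (par v), ~~ ab P (iter k par (par v)) &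
                forall j, j < k -> ab P (iter j par (par v))].
Proof.
move=> HP vV; have pV := parV vV.
have [H1 H2] := depth_spec pV.
have H3 : ~~ ab P (iter (depth (par v)) par (par v)) by rewrite H1 ab_r.
have [k [_ E Hk Hj]] := @climb_spec P #|T| (par v) (depth (par v)) H3 ltac:(slia).
by exists k.
Qed.

Lemma fpar_char P v k : (forall x, x \in P -> ~~ g x) -> v \in V ->
  ~~ ab P (iter k par (par v)) -> (forall j, j < k -> ab P (iter j par (par v))) ->
  fpar P v = iter k par (par v).
Proof.
move=> HP vV Hk Hj; have [k' [-> Hk' Hj']] := fpar_ex HP vV.
by rewrite (first_uniq Hk' Hj' Hk Hj).
Qed.

Lemma fparV P v : (forall x, x \in P -> ~~ g x) -> v \in V -> fpar P v \in V.
Proof. by move=> HP vV; have [k [-> _ _]] := fpar_ex HP vV; apply/iterV/parV. Qed.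

Lemma anc_ab P x b k : b \in V -> x = iter k.+1 par b -> x != r ->
  (~~ g x -> x \in P) -> (~~ g (par x) -> par x \in P) -> ab P x.
Proof.
move=> bV Ex xr H1 H2.
have xV : x \in V by rewrite Ex; apply: iterV.
case: (boolP (g x)) => gx; last by rewrite /ab H1.
case: (boolP (g (par x))) => gp; last by rewrite /ab xr H2 ?orbT.
have := gg_leaf xV xr gx gp; rewrite /is_leaf => /eqP/setP/(_ (iter k par b)).
rewrite childrenP in_set0 iterV // -iterS -Ex eqxx andbT /=.
move/negbFE/eqP => E; move: Ex; rewrite iterS E parr => E2; by rewrite E2 eqxx in xr.
Qed.


Definition R P a b := [&& a \in V, a \notin P, b \in V, b \notin P &
  ((a != r) && (fpar P a == b)) || ((b != r) && (fpar P b == a))].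

Definition Inv P (G : graph T) := [/\ wf_graph G, G.1 = V :\: [set x | x \in P] &
  forall a b, a != b -> adj G a b = R P a b].

Lemma RC P a b : R P a b = R P b a.
Proof.
rewrite /R orbC; case: (a \in V); case: (a \in P); case: (b \in V); case: (b \in P) => //.
Qed.

Section Step.
Variables (P : seq T) (h : T).
Hypothesis HP : forall x, x \in P -> x \in V /\ ~~ g x.
Hypothesis hV : h \in V.
Hypothesis gh : ~~ g h.
Hypothesis hP : h \notin P.
Hypothesis Pdeep : forall x, x \in P -> depth h <= depth x.
Hypothesis Pall : forall x, x \in V -> ~~ g x -> depth h < depth x -> x \in P.

Let HPg : forall x, x \in P -> ~~ g x. Proof. by move=> x /HP []. Qed.
Local Notation c := (child V r par h).
Local Notation p := (par h).
Local Notation P' := (rcons P h).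

Let HPg' : forall x, x \in P' -> ~~ g x.
Proof. by move=> x; rewrite mem_rcons in_cons => /orP[/eqP->|/HPg]. Qed.

Let hr : h != r. Proof. by apply/eqP => E; move: gh; rewrite E gr. Qed.
Let cspec := child_spec hV gh.
Let cV : c \in V. Proof. by case: cspec. Qed.
Let cr : c != r. Proof. by case: cspec. Qed.
Let pc : par c = h. Proof. by case: cspec. Qed.
Let cuniq : forall v, v \in V -> v != r -> par v = h -> v = c. Proof. by case: cspec. Qed.
Let gc : g c. Proof. exact: g_child hV gh cV cr pc. Qed.
Let cP : c \notin P. Proof. by apply/negP => /HPg; rewrite gc. Qed.
Let dc : depth c = (depth h).+1.
Proof. have [E E2] := depth_par cV cr; rewrite pc in E; slia. Qed.
Let pV : p \in V. Proof. exact: parV. Qed.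
Let dp : depth p = (depth h).-1 /\ 0 < depth h. Proof. exact: depth_par. Qed.
Let pP : p \notin P. Proof. by apply/negP => /Pdeep; case: dp => ->; slia. Qed.
Let abp : ab P p = false.
Proof.
rewrite /ab (negbTE pP) /=; apply/negP => /andP[_ /Pdeep].
have := depth_iter 1 pV; rewrite /= => ->; case: dp => ->; slia.
Qed.
Let abh : ab P h = false. Proof. by rewrite /ab (negbTE hP) (negbTE pP) andbF. Qed.
Let abc : ab P c = false. Proof. by rewrite /ab (negbTE cP) pc (negbTE hP) andbF. Qed.
Let fh : fpar P h = p.
Proof. by rewrite (@fpar_char P h 0) //= abp. Qed.
Let fc : fpar P c = h.
Proof. by rewrite (@fpar_char P c 0) //= pc abh. Qed.
Let pneh : p != h. Proof. apply/eqP => E; have := f_equal depth E; case: dp; slia. Qed.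
Let pnec : p != c. Proof. apply/eqP => E; have := f_equal depth E; case: dp; slia. Qed.
Let cneh : c != h. Proof. apply/eqP => E; have := f_equal depth E; slia. Qed.

Lemma fb_h b : b \in V -> fpar P b = h -> b = c.
Proof.
move=> bV; have [[|k] [-> Hk Hj]] := fpar_ex HPg bV => /= E.
- apply: cuniq => //; apply/eqP => br; move: E; rewrite br parr => E.
  by move: hr; rewrite E eqxx.
- have zV : iter k par (par b) \in V by apply/iterV/parV.
  have zr : iter k par (par b) != r.
    by apply/eqP => Ez; move: E; rewrite Ez parr => E; move: hr; rewrite E eqxx.
  have := Hj k (ltnSn k); rewrite (cuniq zV zr E) abc //.
Qed.

Definition inS b := [&& b \in V, b \notin P, b != r & fpar P b == c].

Lemma inS_depth b : inS b -> depth c < depth b.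
Proof.
case/and4P => bV _ br /eqP; have [k [-> _ _]] := fpar_ex HPg bV.
rewrite -iterSr => E; have := depth_iter k.+1 bV; rewrite E => dE.
have : 0 < depth c by case: (depth_par cV cr).
slia.
Qed.

Lemma inS_ne b : inS b -> [/\ b != c, b != h & b != p].
Proof.
move=> /inS_depth d; split; apply/eqP => E; rewrite E in d; try slia.
case: dp => E2; slia.
Qed.

Lemma inS_p : inS p = false. Proof. by apply/negP => /inS_ne [_ _]; rewrite eqxx. Qed.
Lemma inS_h : inS h = false. Proof. by apply/negP => /inS_ne [_]; rewrite eqxx. Qed.
Lemma inS_c : inS c = false. Proof. by apply/negP => /inS_ne []; rewrite eqxx. Qed.

Lemma key a b : inS a -> b \in V -> fpar P b != a.
Proof.
move=> Sa bV; apply/eqP => E.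
have da := inS_depth Sa; move: Sa => /and4P[aV _ ar _].
have [k [E2 Hk _]] := fpar_ex HPg bV.
move: Hk; rewrite -E2 E; apply/negP/negPn.
apply: (@anc_ab P a b k) => //; first by rewrite iterSr -E2 E.
- by move=> ga; apply: Pall => //; slia.
- move=> gpa; apply: Pall => //; first exact: parV.
  case: (depth_par aV ar) => ? ?; slia.
Qed.

Lemma RP_c x : x != c -> R P c x = (x == h) || inS x.
Proof.
move=> xc; rewrite /R /inS cV cP cr fc /=.
case: (eqVneq x h) => [->|xh]; first by rewrite hV hP.
by rewrite /= !andbA.
Qed.

Lemma RP_h x : x != h -> R P h x = (x == p) || (x == c).
Proof.
move=> xh; rewrite /R hV hP hr fh /=.
case: (eqVneq x p) => [->|xp]; first by rewrite pV pP ?eqxx.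
case: (eqVneq x c) => [->|xc]; first by rewrite cV cP cr fc ?eqxx ?orbT.
rewrite /=.
case: (boolP (x \in V)) => //= xV; case: (x \in P) => //=.
by apply/negP => /andP[_ /eqP /(fb_h xV) E]; rewrite E eqxx in xc.
Qed.

Lemma RP_S a x : inS a -> x != a -> R P a x = (x == c).
Proof.
move=> Sa xa; have Sa' := Sa; move: Sa' => /and4P[aV aP ar /eqP fa].
rewrite /R aV aP ar fa /=.
case: (eqVneq x c) => [->|xc]; first by rewrite cV cP ?eqxx.
rewrite /=.
case: (boolP (x \in V)) => //= xV; case: (x \in P) => //=.
by rewrite (negbTE (key Sa xV)) andbF.
Qed.

Lemma abP' x : x \in V -> ab P' x = [|| ab P x, x == h | x == c].
Proof.
move=> xV; rewrite /ab !mem_rcons !in_cons.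
case: (eqVneq x c) => [->|xc].
  by rewrite cr pc eqxx !orbT.
have -> : (x != r) && ((par x == h) || (par x \in P)) = (x != r) && (par x \in P).
  case: (eqVneq x r) => //= xr; case: (eqVneq (par x) h) => //= E.
  by rewrite (cuniq xV xr E) eqxx in xc.
by case: (x == h); case: (x \in P); case: (_ && _).
Qed.

Lemma f'c : fpar P' c = p.
Proof.
rewrite (@fpar_char P' c 1) //= ?pc //.
- by rewrite abP' // abp (negbTE pneh) (negbTE pnec).
- by case=> // _; rewrite /= abP' // eqxx orbT.
Qed.

Lemma f'S x : inS x -> fpar P' x = p.
Proof.
move=> Sx; move: (Sx) => /and4P[xV _ _ /eqP fx].
have [k [E Hk Hj]] := fpar_ex HPg xV; rewrite E in fx.
rewrite (@fpar_char P' x k.+2) //.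
- by rewrite !iterS fx pc.
- by rewrite !iterS fx pc abP' // abp (negbTE pneh) (negbTE pnec).
- move=> j jk; have jV : iter j par (par x) \in V by apply/iterV/parV.
  rewrite abP' //; case: (ltngtP j k) => [jk'| |->]; first by rewrite Hj.
  + move=> kj; have -> : j = k.+1 by slia.
    by rewrite iterS fx pc eqxx orbT.
  + by rewrite fx eqxx !orbT.
Qed.

Lemma f'plain x : x \in V -> x != c -> ~~ inS x -> x \notin P -> x != r ->
  fpar P' x = fpar P x.
Proof.
move=> xV xc Sx xP xr; have [k [E Hk Hj]] := fpar_ex HPg xV.
rewrite E (@fpar_char P' x k) //.
- rewrite abP'; last by apply/iterV/parV.
  rewrite (negbTE Hk) /=; apply/norP; split; apply/eqP => E2.
  + by rewrite -E in E2; rewrite (fb_h xV E2) eqxx in xc.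
  + by move: Sx; rewrite /inS xV xP xr E E2 eqxx.
- by move=> j jk; rewrite abP' ?Hj //; apply/iterV/parV.
Qed.

Definition plain x := [&& x != h, x != c & ~~ inS x].

Lemma notP' x : (x \notin P') = (x != h) && (x \notin P).
Proof. by rewrite mem_rcons in_cons negb_or. Qed.

Lemma RP'_h1 x : R P' h x = false.
Proof. by rewrite /R notP' eqxx andbF. Qed.
Lemma RP'_h2 x : R P' x h = false.
Proof. by rewrite RC RP'_h1. Qed.

Lemma RP'_plain a b : plain a -> plain b -> R P' a b = R P a b.
Proof.
move=> /and3P[ah ac Sa] /and3P[bh bc Sb].
rewrite /R !notP' ah bh /=.
case: (boolP (a \in V)) => //= aV; case: (boolP (a \in P)) => //= aP.
case: (boolP (b \in V)) => //= bV; case: (boolP (b \in P)) => //= bP.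
case: (eqVneq a r) => [_|ar] /=; case: (eqVneq b r) => [_|br] //=;
  rewrite ?f'plain //.
Qed.

Lemma RP'_c b : plain b -> R P' c b = (b == p).
Proof.
move=> /and3P[bh bc Sb]; rewrite /R !notP' cV cneh cP bh cr f'c /=.
case: (eqVneq b p) => [->|bp]; first by rewrite pV pP ?eqxx.
rewrite /=.
case: (boolP (b \in V)) => //= bV; case: (boolP (b \in P)) => //= bP.
case: (eqVneq b r) => //= br; rewrite f'plain //.
by apply/negP => /eqP fb; move: Sb; rewrite /inS bV bP br fb eqxx.
Qed.

Lemma RP'_S a b : inS a -> plain b -> R P' a b = (b == p).
Proof.
move=> Sa /and3P[bh bc Sb]; have [_ ah _] := inS_ne Sa.
move: (Sa) => /and4P[aV aP ar _].
rewrite /R !notP' aV ah aP bh ar f'S //=.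
case: (eqVneq b p) => [->|bp]; first by rewrite pV pP ?eqxx.
rewrite /=.
case: (boolP (b \in V)) => //= bV; case: (boolP (b \in P)) => //= bP.
case: (eqVneq b r) => //= br; rewrite f'plain //.
by rewrite (negbTE (key Sa bV)).
Qed.

Lemma RP'_cS b : inS b -> R P' c b = false.
Proof.
move=> Sb; have [bc bh bp] := inS_ne Sb; move: (Sb) => /and4P[_ _ br _].
rewrite /R f'c f'S // [p == b]eq_sym (negbTE bp) (negbTE pnec).
by rewrite !andbF.
Qed.

Lemma RP'_SS a b : inS a -> inS b -> R P' a b = false.
Proof.
move=> Sa Sb; have [_ _ bp] := inS_ne Sb; have [_ _ ap] := inS_ne Sa.
rewrite /R f'S // f'S // [p == b]eq_sym (negbTE bp) [p == a]eq_sym (negbTE ap).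
by rewrite !andbF.
Qed.

Definition Qf x := (x == h) || inS x.
Definition Tf x := [|| x == p, x == c | inS x].

Lemma Qc : Qf c = false. Proof. by rewrite /Qf inS_c (negbTE cneh). Qed.
Lemma QS x : inS x -> Qf x = true. Proof. by rewrite /Qf => ->; rewrite orbT. Qed.
Lemma Qpl x : plain x -> Qf x = false.
Proof. by case/and3P => xh _ Sx; rewrite /Qf (negbTE xh) (negbTE Sx). Qed.
Lemma Tc : Tf c = true. Proof. by rewrite /Tf eqxx orbT. Qed.
Lemma TS x : inS x -> Tf x = true. Proof. by rewrite /Tf => ->; rewrite !orbT. Qed.
Lemma Tpl x : plain x -> Tf x = (x == p).
Proof. by case/and3P => _ xc Sx; rewrite /Tf (negbTE xc) (negbTE Sx) !orbF. Qed.

Lemma step G : Inv P G -> Inv P' (Xop (child V r par) h G).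
Proof.
case=> wG G1 EG.
set G1' := LCop c G; set G2 := LCop h G1'; set G3 := Zop h G2; set G4 := LCop c G3.
have -> : Xop (child V r par) h G = G4 by [].
have w1 : wf_graph G1' := @wf_LC _ c G wG.
have w2 : wf_graph G2 := @wf_LC _ h G1' w1.
have w3 : wf_graph G3 := @wf_Z _ h G2 w2.
have w4 : wf_graph G4 := @wf_LC _ c G3 w3.
have N0 : forall x, (x \in nbhd G c) = Qf x.
  move=> x; rewrite nbhdE //; case: (eqVneq x c) => [->|xc] /=; first by rewrite Qc.
  have cx : c != x by rewrite eq_sym.
  by rewrite EG // RP_c.
have E1 : forall a b, a != b -> adj G1' a b = R P a b (+) (Qf a && Qf b).
  by move=> a b ab; rewrite adj_LC // EG // !N0.
have N1 : forall x, (x \in nbhd G1' h) = Tf x.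
  move=> x; rewrite nbhdE //; case: (eqVneq x h) => [->|xh] /=.
    by rewrite /Tf inS_h (eq_sym h p) (negbTE pneh) (eq_sym h c) (negbTE cneh).
  have hx : h != x by rewrite eq_sym.
  rewrite E1 // RP_h // /Qf eqxx (negbTE xh) /= /Tf.
  case: (boolP (inS x)) => Sx; last by rewrite addbF orbF.
  have [xc _ xp] := inS_ne Sx; by rewrite (negbTE xc) (negbTE xp).
have E2 : forall a b, a != b -> adj G2 a b = adj G1' a b (+) (Tf a && Tf b).
  by move=> a b ab; rewrite adj_LC // !N1.
have N3 : forall x, x \in nbhd G3 c -> x = p.
  move=> x; rewrite nbhdE // => /andP[xc]; rewrite adj_Z => /and3P[A _ xh].
  have cx : c != x by rewrite eq_sym.
  move: A; rewrite E2 // E1 // RP_c // Qc Tc /Tf (negbTE xh) (negbTE xc) /=.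
  by case: (inS x); rewrite ?orbT ?orbF //= => /eqP.
have E4 : forall a b, a != b -> adj G4 a b = adj G3 a b.
  move=> a b ab; rewrite adj_LC //.
  case: (boolP (a \in nbhd G3 c)) => [/N3 Ea|_]; last by rewrite addbF.
  case: (boolP (b \in nbhd G3 c)) => [/N3 Eb|_]; last by rewrite addbF.
  by move: ab; rewrite Ea Eb eqxx.
split => //.
  rewrite /G4 /G3 /G2 /G1' /= G1; apply/setP => x.
  by rewrite !inE mem_rcons in_cons negb_or andbA [(x != h) && _]andbC.
move=> a b ab; rewrite E4 // adj_Z E2 // E1 //.
case: (eqVneq a h) => [->|ah]; first by rewrite andbF /= RP'_h1.
case: (eqVneq b h) => [->|bh]; first by rewrite !andbF RP'_h2.
rewrite !andbT.
case: (eqVneq a c) => [Ea|ac].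
  rewrite Ea in ab *; have bc : b != c by rewrite eq_sym.
  case: (boolP (inS b)) => Sb.
    by rewrite (RP_c bc) Sb orbT Qc (TS Sb) Tc (RP'_cS Sb).
  have pb : plain b by rewrite /plain bh bc Sb.
  by rewrite (RP_c bc) (negbTE bh) (negbTE Sb) Qc Tc (Tpl pb) (RP'_c pb).
case: (boolP (inS a)) => Sa.
  have ba : b != a by rewrite eq_sym.
  case: (eqVneq b c) => [Eb|bc].
    rewrite Eb in ba *.
    by rewrite (RP_S Sa ba) eqxx (QS Sa) Qc (TS Sa) Tc (RC P' a c) (RP'_cS Sa).
  case: (boolP (inS b)) => Sb.
    by rewrite (RP_S Sa ba) (negbTE bc) (QS Sa) (QS Sb) (TS Sa) (TS Sb) (RP'_SS Sa Sb).
  have pb : plain b by rewrite /plain bh bc Sb.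
  by rewrite (RP_S Sa ba) (negbTE bc) (QS Sa) (Qpl pb) (TS Sa) (Tpl pb) (RP'_S Sa pb).
have pa : plain a by rewrite /plain ah ac Sa.
case: (eqVneq b c) => [Eb|bc].
  rewrite Eb in ab *.
  by rewrite (RC P a c) (RP_c ac) (negbTE ah) (negbTE Sa) (Qpl pa) Qc (Tpl pa) Tc andbT (RC P' a c) (RP'_c pa).
case: (boolP (inS b)) => Sb.
  by rewrite (RC P a b) (RP_S Sb ab) (negbTE ac) (Qpl pa) (QS Sb) (Tpl pa) (TS Sb) /= (RC P' a b) (RP'_S Sb pa) andbT.
have pb : plain b by rewrite /plain bh bc Sb.
rewrite (Qpl pa) (Qpl pb) (Tpl pa) (Tpl pb) (RP'_plain pa pb).
case: (eqVneq a p) => [Ea|_]; last by rewrite /= !addbF.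
case: (eqVneq b p) => [Eb|_]; last by rewrite /= !addbF.
by move: ab; rewrite Ea Eb eqxx.
Qed.

End Step.

Lemma fpar_nil v : fpar [::] v = par v.
Proof. by rewrite /fpar; case: #|T| => //= n; rewrite /ab !in_nil andbF. Qed.

Lemma par_neq v : v \in V -> v != r -> v != par v.
Proof.
move=> vV vr; apply/eqP => E; have [d1 d2] := depth_par vV vr.
rewrite -E in d1; slia.
Qed.

Lemma Inv_init : Inv [::] (tree_graph V r par).
Proof.
split.
- move=> e /imsetP [v]; rewrite inE => /andP[vV vr] ->.
  exists v, (par v); split=> //; [exact: parV | exact: par_neq].
- by apply/setP => x; rewrite !inE in_nil.
- move=> a b ab; rewrite /adj /R !fpar_nil /=.
  apply/imsetP/idP.
  + case=> v; rewrite inE => /andP[vV vr] /set2_eq [[-> ->]|[-> ->]].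
    * by rewrite vV parV // vr eqxx.
    * by rewrite vV parV // vr eqxx orbT.
  + case/and3P => aV bV /orP[/andP[ar /eqP <-]|/andP[br /eqP <-]].
    * by exists a; rewrite ?inE ?aV.
    * by exists b; rewrite ?inE ?bV // setUC.
Qed.

Lemma fpar_final P v : (forall x, (x \in P) = (x \in V) && ~~ g x) -> v \in V -> fpar P v = r.
Proof.
move=> HP vV.
have HPg : forall x, x \in P -> ~~ g x by move=> x; rewrite HP => /andP[].
have [k [-> Hk _]] := fpar_ex HPg vV.
case: (eqVneq (iter k par (par v)) r) => // yr.
move: Hk; rewrite (@anc_ab P _ v k) //.
- by rewrite iterSr.
- by move=> gy; rewrite HP gy iterV // parV.
- by move=> gy; rewrite HP gy parV // iterV // parV.
Qed.

Lemma star_adj (W : {set T}) a b :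
  adj (star W r) a b = ((a == r) && (b \in W :\ r)) || ((b == r) && (a \in W :\ r)).
Proof.
apply/imsetP/orP.
- case=> v vW /set2_eq [[-> ->]|[-> ->]]; [left|right]; by rewrite eqxx.
- case=> /andP[/eqP -> bW]; first by exists b.
  by exists a => //; rewrite setUC.
Qed.

Lemma Inv_final s G : (forall x, (x \in s) = (x \in V) && ~~ g x) ->
  Inv s G -> G = star [set v in V | g v] r.
Proof.
move=> Hs [wG G1 EG]; apply: graph_ext => //.
- move=> e /imsetP [v]; rewrite !inE => /andP[vr /andP[vV gv]] ->.
  by exists r, v; split; rewrite ?inE ?rV ?gr ?vV ?gv // eq_sym.
- by rewrite G1; apply/setP => x; rewrite !inE Hs; case: (x \in V); case: (g x).
- move=> a b ab; rewrite EG // star_adj /R !Hs.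
  case: (boolP (a \in V)) => aV; last first.
    have ar : (a == r) = false by apply/negbTE; apply: contraNneq aV => ->; exact: rV.
    by rewrite !inE (negbTE aV) ar /= !andbF.
  case: (boolP (b \in V)) => bV; last first.
    have br : (b == r) = false by apply/negbTE; apply: contraNneq bV => ->; exact: rV.
    by rewrite !inE (negbTE bV) br /= !andbF.
  rewrite !fpar_final // !inE aV bV /= !negbK.
  case: (eqVneq a r) => [->|ar]; case: (eqVneq b r) => [->|br] //=;
    rewrite ?gr ?andbT ?andbF ?orbF //.
Qed.

Definition drel (a b : T) := ~~ (depth a < depth b).

Lemma loop s1 s2 G : Inv s1 G -> uniq (s1 ++ s2) ->
  (forall x, (x \in s1 ++ s2) = (x \in V) && ~~ g x) ->
  pairwise drel (s1 ++ s2) ->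
  Inv (s1 ++ s2) (foldl (fun G h => Xop (child V r par) h G) G s2).
Proof.
elim: s2 s1 G => [|h s2 IH] s1 G I; first by rewrite cats0.
move=> U Hs Pw /=; rewrite -cat_rcons; apply: IH; rewrite ?cat_rcons //.
have hin : h \in s1 ++ h :: s2 by rewrite mem_cat in_cons eqxx orbT.
have /andP[hV gh] : (h \in V) && ~~ g h by rewrite -Hs.
move: U; rewrite cat_uniq => /and3P[_ /hasPn hn _].
move: Pw; rewrite pairwise_cat pairwise_cons => /and3P[/allrelP A _ /andP[/allP B _]].
apply: step => //.
- by move=> x xs; have := Hs x; rewrite mem_cat xs /= => /esym/andP[].
- by apply: hn; rewrite in_cons eqxx.
- move=> x xs; have := A x h xs; rewrite in_cons eqxx => /(_ isT); rewrite /drel; slia.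
- move=> x xV gx dx; have := Hs x; rewrite xV gx mem_cat in_cons => /orP[//|/orP[/eqP E|xs2]].
    by rewrite E ltnn in dx.
  by have := B x xs2; rewrite /drel dx.
Qed.

Lemma apply_X G (c : T -> T) s :
  apply_ops G (flatten [seq [:: (true, c h); (true, h); (false, h); (true, c h)] | h <- s])
  = foldl (fun G h => Xop c h G) G s.
Proof. by elim: s G => //= h s IH G; rewrite /apply_ops foldl_cat -/(apply_ops _ _) IH. Qed.

End Tree.

Theorem theorem2 (T : finType) (V : {set T}) (r : T) (par : T -> T) (g : T -> bool)
    (s : seq T) :
  repeater_tree V r par g ->
  uniq s ->
  (forall h, (h \in s) = (h \in V) && ~~ g h) ->
  pairwise (fun a b => ~~ (depth r par a < depth r par b)) s ->
  foldl (fun G h => Xop (child V r par) h G) (tree_graph V r par) s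
    = star [set v in V | g v] r /\
  (forall G : graph T, wf_graph G -> vertex_minor (tree_graph V r par) G ->
     vertex_minor (star [set v in V | g v] r) G).
Proof.
move=> Hrep U Hs Pw.
have I := @loop _ V r par g Hrep [::] s (tree_graph V r par) (Inv_init Hrep) U Hs Pw.
have F := Inv_final Hrep Hs I.
split; first exact: F.
move=> G _ [ops Hops].
exists (ops ++ flatten [seq [:: (true, child V r par h); (true, h); (false, h);
                               (true, child V r par h)] | h <- s]).
have AC : forall (H : graph T) o1 o2, apply_ops H (o1 ++ o2) = apply_ops (apply_ops H o1) o2.
  by move=> H o1 o2; rewrite /apply_ops foldl_cat.
rewrite AC Hops apply_X.
exact: F.
Qed.
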